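(* Let $p$ be a prime and $G$ a finite Abelian $p$-group. Then $\operatorname{rank}K(G\times C_p)-\operatorname{rank}K(G,C_p)=\operatorname{rank}B(G)-1$, where $\operatorname{rank}B(G)$ is the number of subgroups of $G$.
   Context: $B(\Pi)$ is the Burnside ring of a finite group $\Pi$ (for $\Pi$ Abelian, free with basis the subgroups $S\le\Pi$, corresponding to $\Pi/S$); $f_\Pi:B(\Pi)\to R_{\mathbb Q}(\Pi)$, $S\mapsto[\mathbb Q[\Pi/S]]$, and $K(\Pi)=\ker f_\Pi$ (Brauer relations). For $K\le G$ and a homomorphism $\rho:K\to C_p$, the graph is $K\times\rho=\{(k,\rho(k))\}\le G\times C_p$; $B(G,C_p)\subset B(G\times C_p)$ is spanned by all graphs, and $K(G,C_p)=K(G\times C_p)\cap B(G,C_p)$. *)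

(* Defs.v *)
From HB Require Import structures.
From mathcomp Require Import all_boot all_order all_algebra all_fingroup all_solvable all_field all_character pgroup.
Set Implicit Arguments. Unset Strict Implicit. Unset Printing Implicit Defensive.
Import GRing.Theory Num.Theory.
Local Open Scope ring_scope.
Local Open Scope group_scope.

Section Burnside.

(* Rational Burnside ring B(P) (x) Q of a finite group P, coordinates  *)
(* indexed by the subgroups of P (basis element S <-> P/S).            *)
(* The map f_P : S |-> [Q[P/S]] is recorded through the character of   *)
(* Q[P/S], i.e. the permutation character 'Ind[P, S] 1 (the character  *)
(* map R_Q(P) -> class functions is injective).                        *)
Variable pT : finGroupType.

Definition sub_idx (P : {group pT}) (i : 'I_#|subgroups P|) : {group pT} :=
  enum_val i.

Definition elt_idx (j : 'I_#|pT|) : pT := enum_val j.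

Definition burnside_mx (P : {group pT}) :
    'M[algC]_(#|subgroups P|, #|pT|) :=
  \matrix_(i, j) ('Ind[P, sub_idx i] (1 : 'CF(sub_idx i))) (elt_idx j).

(* K(P) (x) Q as a row space: the kernel of f_P. *)
Definition brauerK (P : {group pT}) := kermx (burnside_mx P).

Definition rankK (P : {group pT}) : nat := \rank (brauerK P).

End Burnside.

Section Graphs.

Variables (gT cT : finGroupType).

Definition is_graph (G : {group gT}) (C : {group cT})
    (S : {set (gT * cT)}) : bool :=
  [exists K : {group gT}, exists rho : {ffun gT -> cT},
    [&& K \subset G, morphic K rho, rho @: K \subset C &
        S == [set (k, rho k) | k in K]]].

(* Coordinate subspace B(G, C) (x) Q of B(G x C) (x) Q spanned by graphs *)
Definition graph_span (G : {group gT}) (C : {group cT}) :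
    'M[algC]_(#|subgroups (setX G C)|) :=
  diag_mx (\row_i ((is_graph G C (sub_idx i))%:R : algC)).

(* rank K(G, C) = rank (K(G x C) meet B(G, C)) *)
Definition rankKgraph (G : {group gT}) (C : {group cT}) : nat :=
  \rank (brauerK (setX_group G C) :&: graph_span G C)%MS.

End Graphs.

(* Main.v *)
Require Import Defs.
From HB Require Import structures.
From mathcomp Require Import all_boot all_order all_algebra all_fingroup all_solvable all_field all_character pgroup.
From mathcomp Require Import ring zify.
Set Implicit Arguments. Unset Strict Implicit. Unset Printing Implicit Defensive.
Import GRing.Theory Num.Theory.

Section Part1.

Section S.
Variables (gT cT : finGroupType) (G : {group gT}) (C : {group cT}).
Local Open Scope group_scope.

Lemma pairX (a : gT) (b : cT) k : (a, b) ^+ k = (a ^+ k, b ^+ k).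
Proof. by elim: k => [|k IH]; rewrite ?expg0 // !expgS IH. Qed.

Lemma graph_triv (S : {set gT * cT}) c : is_graph G C S -> (1, c) \in S -> c = 1.
Proof.
case/existsP=> K /existsP[rho /and4P[_ /morphicP mrho _ /eqP ->]].
case/imsetP=> k kK [k1 ->]; rewrite -k1.
have := mrho 1 1 (group1 K) (group1 K); rewrite mulg1 => /(congr1 (fun t => t * (rho 1)^-1)).
by rewrite mulgV -mulgA mulgV mulg1.
Qed.

Lemma triv_graph (S : {group gT * cT}) : S \subset setX G C ->
  (forall c, (1, c) \in S -> c = 1) -> is_graph G C S.
Proof.
move=> sSP triv.
have uniq2 k c1 c2 : (k, c1) \in S -> (k, c2) \in S -> c1 = c2.
  move=> h1 h2; have := groupM (groupVr h1) h2.
  have -> : (k, c1)^-1 * (k, c2) = (1, c1^-1 * c2) by congr (_, _); apply: mulVg.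
  move/triv => /(congr1 (fun t => c1 * t)); by rewrite mulKVg mulg1.
pose rho := [ffun k => odflt 1 [pick c | (k, c) \in S]].
have rhoE k c : (k, c) \in S -> rho k = c.
  move=> h; rewrite ffunE; case: pickP => [c' /= h'|/(_ c) /=]; last by rewrite h.
  exact: uniq2 h' h.
have inK k : k \in fst @* S -> (k, rho k) \in S.
  case/morphimP=> [[k' c] _ Sx ->] /=; by rewrite (rhoE _ _ Sx).
apply/existsP; exists (fst @* S)%G; apply/existsP; exists rho.
apply/and4P; split.
- apply/subsetP=> k /inK /(subsetP sSP); by rewrite inE => /andP[].
- apply/morphicP=> x y /inK hx /inK hy; have := groupM hx hy.
  by move/rhoE.
- apply/subsetP=> c /imsetP[k /inK /(subsetP sSP) + ->]; by rewrite inE => /andP[].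
- apply/eqP/setP=> [[k c]]; apply/idP/imsetP => [h|[k' /inK h [-> ->]] //].
  exists k; last by rewrite (rhoE _ _ h).
  by apply/morphimP; exists (k, c); rewrite ?inE.
Qed.

Lemma prime_gen (c0 : cT) : prime #|C| -> c0 \in C -> c0 != 1 -> <[c0]> = C.
Proof.
move=> pC c0C nt; apply/eqP; rewrite eqEcard cycle_subG c0C /=.
have := order_dvdG c0C; rewrite -/(#[c0]).
case/primeP: pC => _ /[apply] /orP[|/eqP-> //]; by rewrite order_eq1 (negPf nt).
Qed.

Lemma contains_C (S : {group gT * cT}) c0 : prime #|C| -> c0 \in C -> c0 != 1 ->
  (1, c0) \in S -> setX 1 C \subset S.
Proof.
move=> pC c0C nt h; apply/subsetP=> [[a c]]; rewrite inE /= => /andP[/set1P -> cC].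
move: cC; rewrite -(prime_gen pC c0C nt) => /cycleP[k ->].
by rewrite -(expg1n _ k) -pairX groupX.
Qed.

Lemma nongraphE (S : {group gT * cT}) : S \subset setX G C -> prime #|C| ->
  (~~ is_graph G C S) = (setX 1 C \subset S).
Proof.
move=> sSP pC; apply/idP/idP => [ng|sCS].
  case: (boolP [forall c, ((1, c) \in S) ==> (c == 1)]) => [/forallP h|].
    by case/negP: ng; apply: triv_graph => // c h1; apply/eqP; exact: implyP (h c) h1.
  rewrite negb_forall => /existsP[c]; rewrite negb_imply => /andP[h1 nt].
  apply: (contains_C pC _ nt h1); move: (subsetP sSP _ h1); by rewrite inE => /andP[].
apply/negP => gS.
have [c cC nt] : exists2 c, c \in C & c != 1.
  apply/exists_inP; rewrite -negb_forall_in; apply/negP => /forall_inP h.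
  have : C \subset [1] by apply/subsetP=> x /h; rewrite inE.
  move/subset_leq_card; rewrite cards1 leqNgt; by rewrite prime_gt1.
have := graph_triv gS (subsetP sCS (1, c) _); rewrite inE /= set11 cC => /(_ erefl) /eqP.
by rewrite (negPf nt).
Qed.

Lemma nontriv_elt : prime #|C| -> exists2 c, c \in C & c != 1.
Proof.
move=> pC; apply/exists_inP; rewrite -negb_forall_in; apply/negP => /forall_inP h.
have : C \subset [1] by apply/subsetP=> x /h; rewrite inE.
move/subset_leq_card; rewrite cards1 leqNgt; by rewrite prime_gt1.
Qed.

Lemma cyc_cases p (x : gT * cT) : prime p -> p.-group G -> #|C| = p -> x \in setX G C ->
  is_graph G C <[x]> \/ <[x]> = setX 1 C.
Proof.
move=> pp pG cC xP; have pC : prime #|C| by rewrite cC.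
have sxP : <[x]> \subset setX G C by rewrite cycle_subG.
case: (boolP (is_graph G C <[x]>)) => [|ng]; first by left.
right; have sCx := ng; rewrite nongraphE // in sCx.
have [c0 c0C nt] := nontriv_elt pC.
have := subsetP sCx (1, c0); rewrite inE /= set11 c0C => /(_ erefl).
case: x xP sCx {sxP ng} => h c; rewrite inE /= => /andP[hG cC'] sCx /cycleP[k].
rewrite pairX => -[hk ck].
have h1 : h = 1.
  apply/eqP; rewrite -order_eq1; apply/eqP; apply: (pnat_1 (pi := p)).
    exact: mem_p_elt pG hG.
  apply: (pnat_dvd (n := k)); first by rewrite order_dvdn -hk.
  rewrite p'natE //; apply/negP => pk.
  have : #[c] %| k.
    apply: dvdn_trans pk; have := order_dvdG cC'; rewrite cC.
    by case/primeP: pp => _ /[apply] /orP[/eqP->|/eqP->].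
  by rewrite order_dvdn -ck (negPf nt).
apply/eqP; rewrite eqEsubset sCx andbT cycle_subG inE /= h1 set11 /=.
exact: cC'.
Qed.
End S.
End Part1.
Section Part2.
Local Open Scope ring_scope.

Lemma rank_diag (F : fieldType) n (d : 'rV[F]_n) :
  \rank (diag_mx d) = (\sum_i (d ord0 i != 0%R) : nat)%N.
Proof.
elim: n d => [|n IH] d; first by rewrite big_ord0 thinmx0 mxrank0.
rewrite big_ord_recl.
pose d' : 'M_(1, 1 + n) := d.
have E := diag_mx_row (lsubmx d') (rsubmx d'); rewrite hsubmxK in E.
have -> : \rank (diag_mx d) = \rank (diag_mx d') by [].
rewrite E rank_diag_block_mx IH; congr (_ + _)%N.
  have r11 (M : 'M[F]_1) : \rank M = (M 0 0 != 0 : nat).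
    case: eqP => M00.
      by apply/eqP; rewrite mxrank_eq0 [M]mx11_scalar M00; apply/eqP/matrixP=> i j; rewrite !mxE mul0rn.
    apply/eqP; rewrite eqn_leq rank_leq_row lt0n mxrank_eq0; apply/eqP => M0; apply: M00; by rewrite M0 mxE.
  rewrite r11 !mxE eqxx mulr1n.
  rewrite !ord1; congr (d _ _ != 0); exact: val_inj.
apply: eq_bigr => i _; rewrite !mxE.
congr (d _ _ != 0); exact: val_inj.
Qed.
End Part2.
Section Part3.
Local Open Scope ring_scope.

Lemma ind_val (pT : finGroupType) (P S : {group pT}) x : abelian P -> S \subset P ->
  ('Ind[P, S] (1 : 'CF(S))) x = (#|P|%:R / #|S|%:R) * (x \in S)%:R.
Proof.
move=> abP sSP; rewrite cfIndE //.
under eq_bigr => y yP do rewrite cfun1E memJ_norm ?(subsetP (sub_abelian_norm abP sSP)) //.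
by rewrite sumr_const -mulr_natr mul1r; ring.
Qed.

Lemma count_gen (pT : finGroupType) (S : {group pT}) (y : pT) :
  \sum_(z in S) (totient #[z]%g)%:R^-1 * ((<[y]> == <[z]>)%g%:R : algC) = (y \in S)%:R.
Proof.
under eq_bigr => z _ do rewrite mulr_natr mulrb.
rewrite -big_mkcondr /=.
have -> : \sum_(z in S | <[y]>%g == <[z]>%g) (totient #[z]%g)%:R^-1
   = \sum_(z in [set z in S | <[y]>%g == <[z]>%g]) ((totient #[y]%g)%:R^-1 : algC).
  apply: eq_big => [z|z /andP[_ /eqP e]]; first by rewrite inE.
  by rewrite /order e.
rewrite sumr_const; case: (boolP (y \in S)) => yS.
  have -> : [set z in S | <[y]>%g == <[z]>%g] = [set z | generator <[y]>%g z].
    apply/setP=> z; rewrite !inE /generator; case: eqP => [e|_]; rewrite ?andbF // andbT.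
    by rewrite -cycle_subG -e cycle_subG.
  rewrite -(totient_gen y) -[LHS]mulr_natr mulVf // pnatr_eq0 -lt0n.
  by rewrite totient_gt0 order_gt0.
have -> : [set z in S | <[y]>%g == <[z]>%g] = set0.
  apply/setP=> z; rewrite !inE; apply/negP => /andP[zS /eqP e]; case/negP: yS.
  by rewrite -cycle_subG e cycle_subG.
by rewrite cards0 mulr0n.
Qed.
End Part3.
Section Part4.
Local Open Scope ring_scope.

Definition indv (pT : finGroupType) (S : {set pT}) : 'rV[algC]_#|pT| :=
  \row_j ((elt_idx j \in S)%:R).
Definition genv (pT : finGroupType) (x : pT) : 'rV[algC]_#|pT| :=
  \row_j ((<[elt_idx j]>%g == <[x]>%g)%:R).

Lemma indv_dec (pT : finGroupType) (S : {group pT}) :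
  indv S = \sum_(z in S) (totient #[z]%g)%:R^-1 *: genv z.
Proof.
apply/rowP => j; rewrite !mxE summxE -count_gen; apply: eq_bigr => z _.
by rewrite !mxE.
Qed.

Section Span.
Variables (pT : finGroupType) (P : {group pT}) (k : nat) (W : 'M[algC]_(k, #|pT|)).
Hypothesis hW : forall x, x \in P -> (indv <[x]>%g <= W)%MS.

Lemma genv_sub x : x \in P -> (genv x <= W)%MS.
Proof.
have [n] := ubnP #[x]%g; elim: n x => // n IH x.
rewrite ltnS => lex xP.
have E := indv_dec <[x]>%G.
rewrite (bigID (fun z => <[z]>%g == <[x]>%g)) /= in E.
have E2 : \sum_(z in <[x]>%g | <[z]>%g == <[x]>%g) (totient #[z]%g)%:R^-1 *: genv z
   = \sum_(z in <[x]>%g) ((totient #[z]%g)%:R^-1 * (<[x]>%g == <[z]>%g)%:R) *: genv x.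
  rewrite big_mkcondr /=; apply: eq_bigr => z _.
  rewrite eq_sym; case: eqP => [e|_]; last by rewrite mulr0 scale0r.
  rewrite mulr1; congr (_ *: _); apply/rowP => j; by rewrite !mxE e.
rewrite E2 -scaler_suml count_gen cycle_id scale1r in E.
have -> : genv x = indv <[x]>%g - \sum_(z in <[x]>%g | <[z]>%g != <[x]>%g)
   (totient #[z]%g)%:R^-1 *: genv z by rewrite E addrK.
apply: addmx_sub; first exact: hW.
rewrite -scaleN1r; apply: scalemx_sub; apply: summx_sub => z /andP[zx nzx].
apply: scalemx_sub; apply: IH.
- apply: leq_trans lex; apply: proper_card; rewrite properEneq nzx /=.
  by rewrite cycle_subG.
- by apply: (subsetP _ _ zx); rewrite cycle_subG.
Qed.

Lemma indv_sub (S : {group pT}) : S \subset P -> (indv S <= W)%MS.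
Proof.
move=> sSP; rewrite indv_dec; apply: summx_sub => z zS.
by apply: scalemx_sub; apply: genv_sub; exact: subsetP sSP z zS.
Qed.
End Span.
End Part4.
Section Part5.
Local Open Scope ring_scope.

Section Main.
Variables (gT cT : finGroupType) (G : {group gT}) (C : {group cT}).
Local Notation pT := (gT * cT)%type.
Local Notation P := (setX_group G C).
Local Notation n := #|subgroups (setX G C)|.
Local Notation A := (burnside_mx P).

Lemma abelP : abelian G -> abelian C -> abelian P.
Proof.
move=> aG aC; rewrite abelianE; apply/centsP => [[a b]]; rewrite !inE /= => /andP[aa bb] [a' b'].
rewrite inE /= => /andP[aa' bb'].
by rewrite /commute; congr (_, _); [apply: (centsP aG) | apply: (centsP aC)].
Qed.

Lemma sub_idxP (i : 'I_n) : sub_idx i \subset P.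
Proof. by have := enum_valP i; rewrite inE. Qed.

Lemma rowA (i : 'I_n) : abelian P ->
  row i A = (#|P|%:R / #|sub_idx i|%:R) *: indv (sub_idx i).
Proof.
move=> aP; apply/rowP => j; rewrite !mxE ind_val //; exact: sub_idxP.
Qed.

Lemma rowDA (i : 'I_n) :
  row i (graph_span G C *m A) = (is_graph G C (sub_idx i))%:R *: row i A.
Proof. by apply/rowP => j; rewrite /graph_span mul_diag_mx !mxE. Qed.


Lemma indv_row (i : 'I_n) : abelian P -> (indv (sub_idx i) <= row i A)%MS.
Proof.
move=> aP; rewrite rowA //; set c := (_ / _ : algC).
have c0 : c != 0 by rewrite mulf_neq0 ?invr_eq0 ?pnatr_eq0 -?lt0n ?cardG_gt0.
have e : c^-1 *: (c *: indv (sub_idx i)) = indv (sub_idx i) by rewrite scalerA mulVf ?scale1r.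
rewrite -{1}e; exact: scalemx_sub (submx_refl _).
Qed.

Lemma H1C_in : (setX_group 1%G C) \in subgroups (setX G C).
Proof. by rewrite inE setXS ?sub1G. Qed.

Definition i0 := enum_rank_in H1C_in (setX_group 1%G C).

Lemma sub_idx_i0 : sub_idx i0 = setX_group 1%G C.
Proof. by rewrite /sub_idx /i0 enum_rankK_in // H1C_in. Qed.

Definition W := (graph_span G C *m A + row i0 A)%MS.

Lemma cyc_W p : prime p -> (p.-group G)%g -> abelian G -> #|C| = p ->
  forall x, x \in P -> (indv <[x]>%g <= W)%MS.
Proof.
move=> pp pG aG cC x xP.
have aP : abelian P by apply: abelP => //; apply/cyclic_abelian/prime_cyclic; rewrite cC.
case: (cyc_cases pp pG cC xP) => [gx|ex].
  have Sin : <[x]>%G \in subgroups (setX G C) by rewrite inE cycle_subG.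
  pose i := enum_rank_in Sin <[x]>%G.
  have si : sub_idx i = <[x]>%G by rewrite /sub_idx /i enum_rankK_in.
  apply: submx_trans (addsmxSl _ _).
  apply: submx_trans (row_sub i _); rewrite rowDA si gx scale1r.
  by have := indv_row i aP; rewrite si.
apply: submx_trans (addsmxSr _ _); rewrite ex.
by have := indv_row i0 aP; rewrite sub_idx_i0.
Qed.

Lemma A_W p : prime p -> (p.-group G)%g -> abelian G -> #|C| = p -> (A <= W)%MS.
Proof.
move=> pp pG aG cC.
have aP : abelian P by apply: abelP => //; apply/cyclic_abelian/prime_cyclic; rewrite cC.
apply/row_subP => i; rewrite rowA //; apply: scalemx_sub.
apply: (indv_sub (P := P)); last exact: sub_idxP.
exact: cyc_W pp pG aG cC.
Qed.


Definition wv : 'cV[algC]_#|{: pT}| :=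
  \col_j ((((elt_idx j).1 == 1%g) && ((elt_idx j).2 != 1%g))%:R).

Lemma indv_w_graph (S : {set pT}) : is_graph G C S -> indv S *m wv = 0.
Proof.
move=> gS; apply/matrixP => a b; rewrite !mxE big1 // => j _; rewrite !mxE.
case: (elt_idx j) => h c /=.
case: (boolP ((h, c) \in S)) => hS; last by rewrite mul0r.
case: eqP => [h1|_]; last by rewrite mulr0.
by move: hS; rewrite h1 => /(graph_triv gS) ->; rewrite eqxx mulr0.
Qed.

Lemma DAw : abelian P -> graph_span G C *m A *m wv = 0.
Proof.
move=> aP; apply/row_matrixP => i; rewrite row_mul rowDA row0.
case: (boolP (is_graph G C (sub_idx i))) => g.
  by rewrite scale1r rowA // -scalemxAl indv_w_graph ?scaler0.
by rewrite scale0r mul0mx.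
Qed.

Lemma i0_w : abelian P -> prime #|C| -> row i0 A *m wv != 0.
Proof.
move=> aP pC; rewrite rowA // sub_idx_i0 -scalemxAl scaler_eq0 negb_or.
rewrite mulf_neq0 ?invr_eq0 ?pnatr_eq0 -?lt0n ?cardG_gt0 //=.
apply/eqP => /matrixP /(_ 0 0); rewrite !mxE.
under eq_bigr => j _ do rewrite !mxE -natrM.
rewrite -natr_sum => /eqP; rewrite pnatr_eq0 => /eqP.
have [c0 c0C nt] := nontriv_elt pC.
rewrite (bigD1 (enum_rank ((1%g, c0) : pT))) //= /elt_idx enum_rankK /=.
by rewrite inE /= set11 c0C eqxx nt.
Qed.


Lemma Aw_rank : abelian P -> prime #|C| -> \rank (A *m wv) = 1%N.
Proof.
move=> aP pC; apply/eqP; rewrite eqn_leq rank_leq_col lt0n mxrank_eq0.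
apply/eqP => e; have := i0_w aP pC; by rewrite -row_mul e row0 eqxx.
Qed.

Lemma ker_sub1 : abelian P -> (kermx A + graph_span G C <= kermx (A *m wv))%MS.
Proof.
move=> aP; rewrite addsmx_sub !sub_kermx mulmxA mulmx_ker mul0mx eqxx /=.
by rewrite mulmxA DAw.
Qed.

Lemma ker_sub2 p : prime p -> (p.-group G)%g -> abelian G -> #|C| = p ->
  (kermx (A *m wv) <= kermx A + graph_span G C)%MS.
Proof.
move=> pp pG aG cC.
have aP : abelian P by apply: abelP => //; apply/cyclic_abelian/prime_cyclic; rewrite cC.
have pC : prime #|C| by rewrite cC.
set K' := kermx (A *m wv).
have : (K' *m A <= W)%MS by apply: submx_trans (submxMl K' A) (A_W pp pG aG cC).
case/sub_addsmxP => u e.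
have u20 : u.2 = 0.
  have : K' *m A *m wv = 0 by rewrite -mulmxA mulmx_ker.
  have DAw' : graph_span G C *m (A *m wv) = 0 by rewrite mulmxA DAw.
  rewrite e mulmxDl -!mulmxA DAw' mulmx0 add0r.
  set s := row i0 A *m wv; rewrite [s]mx11_scalar mul_mx_scalar => /eqP.
  rewrite scaler_eq0 => /orP[/eqP s0|/eqP //].
  have := i0_w aP pC; rewrite -/s [s]mx11_scalar s0.
  by rewrite (_ : 0%:M = 0) ?eqxx //; apply/matrixP => a b; rewrite !mxE mul0rn.
rewrite u20 mul0mx addr0 mulmxA in e.
have -> : K' = (K' - u.1 *m graph_span G C) + u.1 *m graph_span G C by rewrite subrK.
apply: addmx_sub_adds; last exact: submxMl.
by rewrite sub_kermx mulmxBl e subrr.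
Qed.


Lemma rankD : \rank (graph_span G C) = (\sum_(i < n) is_graph G C (sub_idx i))%N.
Proof.
rewrite /graph_span rank_diag; apply: eq_bigr => i _; rewrite mxE.
by case: (is_graph _ _ _); rewrite ?oner_neq0 ?eqxx.
Qed.

Lemma nongraph_set : prime #|C| ->
  [set S in subgroups (setX G C) | ~~ is_graph G C S]
  = (fun H : {group gT} => setX_group H C) @: subgroups G.
Proof.
move=> pC; apply/setP => S; rewrite inE; apply/andP/imsetP.
  rewrite inE => -[sSP]; rewrite nongraphE // => sCS.
  exists (fst @* S)%G; first by rewrite inE; apply/subsetP => h /morphimP[[h' c] _ /(subsetP sSP) + ->]; rewrite inE => /andP[].
  apply: val_inj; apply/setP => [[h c]]; rewrite /= inE /=; apply/idP/andP.
    move=> hcS; split; first by apply/morphimP; exists (h, c); rewrite ?inE.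
    by move: (subsetP sSP _ hcS); rewrite inE => /andP[].
  case=> /morphimP[[h' c'] _ hcS /= ->] cC.
  have c'C : c' \in C by move: (subsetP sSP _ hcS); rewrite inE => /andP[].
  have := groupM hcS (subsetP sCS (1%g, c'^-1 * c)%g _).
  rewrite inE /= set11 groupM ?groupV //= => /(_ erefl).
  have -> : ((h', c') * (1, c'^-1 * c))%g = (h', c) by congr (_, _); [apply: mulg1 | apply: mulKVg].
  done.
case=> H; rewrite inE => sHG ->; split.
  by rewrite inE setXS.
by rewrite nongraphE ?setXS // sub1G.
Qed.

End Main.
End Part5.

Lemma count_ng (gT cT : finGroupType) (G : {group gT}) (C : {group cT}) : prime #|C| ->
  (\sum_(i < #|subgroups (setX G C)|) ~~ is_graph G C (sub_idx i))%N = #|subgroups G|.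
Proof.
move=> pC.
rewrite /sub_idx -(big_enum_val (A := mem (subgroups (setX G C))) (fun S : {group (gT * cT)} => (~~ is_graph G C S : nat))) /=.
rewrite (eq_bigr (fun S : {group (gT * cT)} => if ~~ is_graph G C S then 1 else 0)%N); last by move=> S _; case: (is_graph _ _ _).
rewrite -big_mkcondr /= sum1dep_card.
have -> : [set x | (x \in subgroups (setX G C)) && ~~ is_graph G C x] = [set S in subgroups (setX G C) | ~~ is_graph G C S] by [].
rewrite nongraph_set // card_in_imset // => H1 H2 _ _ e.
apply: val_inj; have := congr1 (fun S : {group _} => ([morphism of fun x => x.1] @* (S : {set _}))%g) e.
by rewrite /= !morphim_fstX.
Qed.

Theorem proposition4p5 (p : nat) (gT cT : finGroupType)
    (G : {group gT}) (C : {group cT}) :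
  prime p -> (p.-group G)%g -> abelian G -> #|C| = p ->
  ((rankK (setX_group G C))%:Z - (rankKgraph G C)%:Z
     = #|subgroups G|%:Z - 1)%R.
Proof.
move=> pp pG aG cC.
have aP : abelian (setX_group G C) by apply: abelP => //; apply/cyclic_abelian/prime_cyclic; rewrite cC.
have pC : prime #|C| by rewrite cC.
set n := #|subgroups (setX G C)|.
set A := burnside_mx (setX_group G C).
set D := graph_span G C.
have h1 := mxrank_sum_cap (kermx A) D.
have h2 : \rank (kermx A + D)%MS = (n - 1)%N.
  have e1 : \rank (kermx A + D)%MS <= \rank (kermx (A *m wv gT cT)) by apply: mxrankS; exact: ker_sub1.
  have e2 : \rank (kermx (A *m wv gT cT)) <= \rank (kermx A + D)%MS by apply: mxrankS; exact: ker_sub2 pp pG aG cC.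
  have -> : \rank (kermx A + D)%MS = \rank (kermx (A *m wv gT cT)) by apply/eqP; rewrite eqn_leq e1 e2.
  by rewrite mxrank_ker Aw_rank.
have h3 : \rank D = (\sum_(i < n) is_graph G C (sub_idx i))%N by exact: rankD.
have h4 : n = (\sum_(i < n) is_graph G C (sub_idx i) + \sum_(i < n) ~~ is_graph G C (sub_idx i))%N.
  rewrite -big_split /= -[LHS]card_ord -sum1_card; apply: eq_bigr => i _; by case: (is_graph _ _ _).
rewrite count_ng // in h4.
have h5 : 0 < #|subgroups G| by apply/card_gt0P; exists 1%G; rewrite inE sub1G.
rewrite /rankK /rankKgraph /brauerK -/A -/D.
move: h1 h2 h3 h4 h5; set a := \rank (kermx A + D)%MS; set b := \rank (kermx A :&: D)%MS;
  set c := \rank (kermx A); set d := \rank D; set g := (\sum_(i < n) _)%N; set m := #|subgroups G|.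
move=> h1 h2 h3 h4 h5; lia.
Qed.
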